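(* Let $\sigma$ be an erasing $k$-block substitution with $w_\epsilon\ne1^k$ that satisfies the optimality condition. Then for every $x\in\mathbb I$ the fiber $f_\sigma^{-1}(x)$ is uncountable.
   Context: Notation: $\mathbb I=[0,1]$. $\{0,1\}^*$ and $\{0,1\}^\omega$ denote finite and infinite binary words, and $\epsilon$ is the empty word. For a word $w$, set $0.w=\sum_iw_i2^{-i}$. For $x\in(0,1]$, $\widetilde x$ is the unique infinite binary expansion of $x$ not ending in $0^\infty$. Fix $k\ge2$. An erasing $k$-block substitution is a map $\sigma:\{0,1\}^k\to\{0,1\}^*$ with exactly one block $w_\epsilon$ such that $\sigma(w_\epsilon)=\epsilon$. It acts blockwise on infinite words, concatenating the images of consecutive $k$-blocks. The map $f_\sigma:\mathbb I\to\mathbb I$ is defined by $f_\sigma(x)=0.\sigma(\widetilde x)$ if $x\in(0,1]$ and $\widetilde x\neq w_\epsilon^\infty$, and $f_\sigma(x)=0$ otherwise. Optimality condition: every $w\in\{0,1\}^\omega$ can be written as $w=\prod_{i\ge1}\sigma(b_i)$ with blocks $b_i\in\{0,1\}^k$ satisfying $\sigma(b_i)\ne\epsilon$. *)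

(* Defs.v *)
From HB Require Import structures.
From mathcomp Require Import all_boot all_order all_algebra.
From mathcomp Require Import all_classical all_reals all_analysis.
Set Implicit Arguments. Unset Strict Implicit. Unset Printing Implicit Defensive.
Import Order.TTheory GRing.Theory Num.Theory.
Import numFieldTopology.Exports numFieldNormedType.Exports.
Local Open Scope classical_set_scope.
Local Open Scope ring_scope.

Definition iword := nat -> bool.

(* 0.w for a finite word w : sum_i w_i 2^{-i} (1-based indices) *)
Definition dyadic {R : realType} (w : seq bool) : R :=
  \sum_(i < size w) (nth false w i)%:R / 2 ^+ i.+1.

Definition iprefix (e : iword) (n : nat) : seq bool := mkseq e n.

Definition val_inf {R : realType} (e : iword) : R :=
  limn (fun n => (dyadic (iprefix e n) : R)).

(* e is the infinite binary expansion of x not ending in 0^infty *)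
Definition is_tilde {R : realType} (x : R) (e : iword) : Prop :=
  (forall n, exists2 m, (n <= m)%N & e m = true) /\
  (fun n => (dyadic (iprefix e n) : R)) @ \oo --> x.

(* \widetilde x (meaningful for x in (0,1], where it exists and is unique) *)
Definition tilde {R : realType} (x : R) : iword :=
  xget (fun _ => false) [set e | is_tilde x e].

Definition block (k : nat) (e : iword) (j : nat) : k.-tuple bool :=
  [tuple e (j * k + i)%N | i < k].

Definition cat_prefix (u : nat -> seq bool) (n : nat) : seq bool :=
  flatten [seq u j | j <- iota 0 n].

Definition subst_prefix (k : nat) (sigma : k.-tuple bool -> seq bool)
  (e : iword) (n : nat) : seq bool :=
  cat_prefix (fun j => sigma (block k e j)) n.

(* 0.sigma(e): binary value of the (possibly finite) word sigma(e) *)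
Definition val_subst {R : realType} (k : nat)
  (sigma : k.-tuple bool -> seq bool) (e : iword) : R :=
  limn (fun n => (dyadic (subst_prefix sigma e n) : R)).

Definition per_word (k : nat) (w : k.-tuple bool) : iword :=
  fun n => nth false w (n %% k).

Definition erasing_with (k : nat) (sigma : k.-tuple bool -> seq bool)
  (weps : k.-tuple bool) : Prop :=
  sigma weps = [::] /\ forall b, sigma b = [::] -> b = weps.

Definition f_sigma {R : realType} (k : nat) (sigma : k.-tuple bool -> seq bool)
  (weps : k.-tuple bool) (x : R) : R :=
  if `[< 0 < x <= 1 /\ tilde x <> per_word weps >] then val_subst sigma (tilde x)
  else 0.

(* w is the infinite concatenation of the words u 0, u 1, ... (each assumed nonempty) *)
Definition is_inf_concat (w : iword) (u : nat -> seq bool) : Prop :=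
  forall n i, (i < size (cat_prefix u n))%N -> w i = nth false (cat_prefix u n) i.

Definition optimal (k : nat) (sigma : k.-tuple bool -> seq bool) : Prop :=
  forall w : iword, exists b : nat -> k.-tuple bool,
    (forall i, sigma (b i) <> [::]) /\ is_inf_concat w (fun i => sigma (b i)).

Definition ones_block (k : nat) : k.-tuple bool := [tuple true | _ < k].

(* Main.v *)
Require Import Defs.
From HB Require Import structures.
From mathcomp Require Import all_boot all_order all_algebra.
From mathcomp Require Import all_classical all_reals all_analysis.
From mathcomp Require Import lra.
Import Order.TTheory GRing.Theory Num.Theory.
Import numFieldTopology.Exports numFieldNormedType.Exports.
Local Open Scope classical_set_scope.
Local Open Scope ring_scope.

Section S.
Context {R : realType}.
Implicit Types e : iword.

Definition D e n : R := \sum_(i < n) (e i)%:R / 2 ^+ i.+1.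

Lemma dyadic_iprefix e n : dyadic (iprefix e n) = D e n.
Proof.
rewrite /dyadic /iprefix /D size_mkseq; apply: eq_bigr => i _.
by rewrite nth_mkseq.
Qed.

Lemma DS e n : D e n.+1 = D e n + (e n)%:R / 2 ^+ n.+1.
Proof. by rewrite /D big_ord_recr. Qed.

Lemma half2 n : (2 ^+ n.+1 : R)^-1 + (2 ^+ n.+1)^-1 = (2 ^+ n)^-1.
Proof.
rewrite exprS invfM.
have : (0 : R) < (2 ^+ n)^-1 by rewrite invr_gt0 exprn_gt0.
set t := (2 ^+ n)^-1 => _; lra.
Qed.

Lemma pow_pos n : (0 : R) < (2 ^+ n)^-1.
Proof. by rewrite invr_gt0 exprn_gt0. Qed.

Lemma D_mono e m n : (m <= n)%N -> D e m <= D e n.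
Proof.
move/subnKC => <-; elim: (n - m)%N => [|p IH]; first by rewrite addn0.
rewrite addnS DS; apply: (le_trans IH); rewrite lerDl.
by rewrite mulr_ge0 // ?invr_ge0 ?exprn_ge0.
Qed.

Lemma D_tail e m n : (m <= n)%N ->
  D e n <= D e m + ((2 ^+ m)^-1 - (2 ^+ n)^-1).
Proof.
move/subnKC => <-; elim: (n - m)%N => [|p IH]; first by rewrite addn0 subrr addr0 lexx.
rewrite addnS DS; have h := half2 (m + p).
have hp := pow_pos (m + p).+1.
have : (e (m + p)%N)%:R / 2 ^+ (m + p).+1 <= (2 ^+ (m + p).+1 : R)^-1.
  by case: (e _) => /=; [rewrite mul1r | rewrite mul0r; apply: ltW].
lra.
Qed.

Lemma D_le1 e n : D e n <= 1.
Proof.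
have := @D_tail e 0 n (leq0n n); rewrite /D big_ord0 expr0 invr1.
have := pow_pos n; lra.
Qed.

Lemma D_ge0 e n : 0 <= D e n.
Proof. by have := @D_mono e 0 n (leq0n n); rewrite /D big_ord0. Qed.


Lemma pow_small (eps : R) : 0 < eps -> exists N, forall n, (N <= n)%N -> (2 ^+ n : R)^-1 <= eps.
Proof.
move=> eps0.
have hz : `|(2 : R)^-1| < 1 by rewrite ger0_norm ?invr_ge0 // invf_lt1 // ltr1n.
have := cvg_expr hz; move/cvgrPdist_le => /(_ eps eps0) [N _ HN].
exists N => n /HN; by rewrite sub0r normrN exprVn ger0_norm // invr_ge0 exprn_ge0.
Qed.

Lemma cvg_half (u : nat -> R) x :
  (forall n, exists m, (n./2 <= m)%N /\ `|x - u n| <= (2 ^+ m)^-1) -> u @ \oo --> x.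
Proof.
move=> H; apply/cvgrPdist_le => eps eps0.
have [N HN] := @pow_small eps eps0.
exists (N.*2)%N => // n /= hn.
have [m [hm hx]] := H n; apply: (le_trans hx); apply: HN.
apply: leq_trans hm; rewrite -(half_double N); exact: half_leq.
Qed.




Fixpoint gs (x : R) n : R :=
  if n is n'.+1 then
    (if gs x n' + (2 ^+ n'.+1)^-1 <= x then gs x n' + (2 ^+ n'.+1)^-1 else gs x n')
  else 0.

Definition gw (x : R) : iword := fun n => gs x n + (2 ^+ n.+1)^-1 <= x.

Lemma D_gw x n : D (gw x) n = gs x n.
Proof.
elim: n => [|n IH]; first by rewrite /D big_ord0.
rewrite DS IH /= /gw; case: ifP => _ /=; first by rewrite mul1r.
by rewrite mul0r addr0.
Qed.

Lemma gw_bound x : 0 <= x <= 1 -> forall n, `|x - D (gw x) n| <= (2 ^+ n)^-1.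
Proof.
move=> /andP[x0 x1] n; rewrite D_gw.
suff : 0 <= x - gs x n <= (2 ^+ n)^-1.
  by case/andP => h1 h2; rewrite ger0_norm.
elim: n => [|n IH]; first by rewrite /= subr0 expr0 invr1 x0 x1.
have h := half2 n; case/andP: IH => h1 h2.
rewrite /=; case: ifP => hc; apply/andP; split; lra.
Qed.


Lemma lim_le (u : nat -> R) (y B : R) : (forall n, u n <= B) -> u @ \oo --> y -> y <= B.
Proof.
move=> hB hc; rewrite -(cvg_lim _ hc) //; apply: limr_le; first exact: cvgP hc.
by exists 0%N.
Qed.

Lemma lim_ge (u : nat -> R) (y B : R) N : (forall n, (N <= n)%N -> B <= u n) -> u @ \oo --> y -> B <= y.
Proof.
move=> hB hc; rewrite -(cvg_lim _ hc) //; apply: limr_ge; first exact: cvgP hc.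
by exists N.
Qed.

Lemma tilde_lt e e' (y : R) m : is_tilde y e -> is_tilde y e' ->
  (forall i, (i < m)%N -> e i = e' i) -> e m = false -> e' m = true -> False.
Proof.
move=> [_ ce] [inf' ce'] heq em em'.
have Deq : D e m = D e' m by apply: eq_bigr => i _; rewrite heq.
have hm := pow_pos m.+1.
have up : y <= D e m + (2 ^+ m.+1)^-1.
  apply: (lim_le _ _ _ _ ce) => n; rewrite dyadic_iprefix.
  have e1 : D e m.+1 = D e m by rewrite DS em mul0r addr0.
  case: (leqP n m.+1) => hn.
    by rewrite -e1; apply: (le_trans (@D_mono e _ _ hn)); rewrite lerDl ltW.
  have := @D_tail e _ _ (ltnW hn); rewrite e1; have := pow_pos n; lra.
have [j hj ej] := inf' m.+1.
have hj1 := pow_pos j.+1.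
have lo : D e m + (2 ^+ m.+1)^-1 + (2 ^+ j.+1)^-1 <= y.
  apply: (@lim_ge _ _ _ j.+1 _ ce') => n hn; rewrite dyadic_iprefix.
  apply: le_trans (@D_mono e' _ _ hn); rewrite DS ej mul1r lerD2r.
  apply: le_trans (@D_mono e' _ _ hj); rewrite DS em' mul1r Deq.
  by rewrite lexx.
lra.
Qed.

Lemma tilde_uniq e e' (y : R) : is_tilde y e -> is_tilde y e' -> e = e'.
Proof.
move=> h h'; apply: funext => n; apply/eqP; apply: contraT => hne.
have ex : exists n, e n != e' n by exists n.
case: (ex_minnP ex) => m hm hmin.
have heq : forall i, (i < m)%N -> e i = e' i.
  move=> i hi; apply/eqP; apply: contraT => hi'.
  by have := hmin i hi'; rewrite leqNgt hi.
move: hm; case em: (e m); case em': (e' m) => // _.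
all: exfalso; first [exact: (@tilde_lt _ _ _ _ h' h (fun i hi => esym (heq i hi)) em' em)
  | exact: (@tilde_lt _ _ _ _ h h' heq em em')].
Qed.

End S.
Section W.
Variables (k : nat) (hk : (0 < k)%N) (sigma : k.-tuple bool -> seq bool)
  (weps : k.-tuple bool) (b : nat -> k.-tuple bool).
Hypothesis hse : sigma weps = [::].
Hypothesis hb : forall i, b i != weps.

Definition Bc (c : nat -> bool) n := if c n./2 (+) odd n then b n./2 else weps.
Definition ec (c : nat -> bool) : iword := fun n => nth false (Bc c (n %/ k)) (n %% k).

Lemma ec_pos c j i : (i < k)%N -> ec c (j * k + i) = nth false (Bc c j) i.
Proof.
by move=> hi; rewrite /ec divnMDl // divn_small // addn0 modnMDl modn_small.
Qed.

Lemma block_ec c j : block k (ec c) j = Bc c j.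
Proof.
apply: eq_from_tnth => i; rewrite tnth_mktuple ec_pos //.
by rewrite (tnth_nth false).
Qed.

Lemma block_per j : block k (per_word weps) j = weps.
Proof.
apply: eq_from_tnth => i; rewrite tnth_mktuple /per_word modnMDl modn_small //.
by rewrite (tnth_nth false).
Qed.

Lemma Bc_even c i : Bc c i.*2 = if c i then b i else weps.
Proof. by rewrite /Bc odd_double half_double addbF. Qed.

Lemma Bc_odd c i : Bc c i.*2.+1 = if c i then weps else b i.
Proof.
rewrite /Bc /= odd_double uphalf_double /=.
by case: (c i).
Qed.

Lemma cat_prefix_S (u : nat -> seq bool) n : cat_prefix u n.+1 = cat_prefix u n ++ u n.
Proof. by rewrite /cat_prefix -addn1 iotaD map_cat flatten_cat /= cats0. Qed.

Lemma sub_even c i :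
  cat_prefix (fun j => sigma (Bc c j)) i.*2 = cat_prefix (fun j => sigma (b j)) i.
Proof.
elim: i => [//|i IH].
rewrite doubleS !cat_prefix_S IH Bc_even Bc_odd -catA.
by case: (c i); rewrite hse ?cats0.
Qed.

Lemma sub_any c n : exists j, (n./2 <= j)%N /\
  cat_prefix (fun j => sigma (Bc c j)) n = cat_prefix (fun j => sigma (b j)) j.
Proof.
rewrite -(odd_double_half n); case: (odd n) => /=.
  rewrite add1n cat_prefix_S sub_even Bc_even.
  rewrite uphalf_double.
  case: (c n./2).
    by exists (n./2).+1; rewrite leqnSn cat_prefix_S.
  by exists n./2; rewrite leqnn hse cats0.
by exists n./2; rewrite add0n half_double leqnn sub_even.
Qed.

Lemma size_cat_prefix (u : nat -> seq bool) j :
  (forall i, u i != [::]) -> (j <= size (cat_prefix u j))%N.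
Proof.
move=> hu; elim: j => [//|j IH].
rewrite cat_prefix_S size_cat -addn1 leq_add //.
by rewrite lt0n size_eq0.
Qed.

Lemma concat_prefix (w : iword) (u : nat -> seq bool) j : is_inf_concat w u ->
  cat_prefix u j = iprefix w (size (cat_prefix u j)).
Proof.
move=> hw; apply: (@eq_from_nth _ false); first by rewrite size_mkseq.
by move=> i hi; rewrite nth_mkseq // -hw.
Qed.

Lemma exists_one (t1 t2 : k.-tuple bool) : t1 != t2 ->
  exists2 i, (i < k)%N & (nth false t1 i || nth false t2 i).
Proof.
move=> hne; case: (boolP [exists i : 'I_k, tnth t1 i || tnth t2 i]).
  by move/existsP => [i hi]; exists i => //; rewrite -!tnth_nth.
move/existsPn => h; case/negP: hne; apply/eqP/eq_from_tnth => i.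
by move: (h i); case: (tnth t1 i); case: (tnth t2 i).
Qed.

Lemma ec_ones c n : exists2 m, (n <= m)%N & ec c m = true.
Proof.
have [i hi h] := @exists_one _ _ (hb n).
have [j [hj hbj]] : exists j, (n.*2 <= j)%N /\ Bc c j = b n.
  case hc: (c n).
    by exists n.*2; rewrite Bc_even hc.
  by exists n.*2.+1; rewrite Bc_odd hc.
have [j' [hj' hwj]] : exists j, (n.*2 <= j)%N /\ Bc c j = weps.
  case hc: (c n).
    by exists n.*2.+1; rewrite Bc_odd hc.
  by exists n.*2; rewrite Bc_even hc.
have le1 : forall jj, (n.*2 <= jj)%N -> (n <= jj * k + i)%N.
  move=> jj hjj; apply: leq_trans (leq_addr _ _).
  apply: leq_trans (leq_pmulr _ hk); apply: leq_trans hjj.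
  by rewrite -addnn leq_addr.
case/orP: h => h.
  by exists (j * k + i)%N; [exact: le1 | rewrite ec_pos // hbj].
by exists (j' * k + i)%N; [exact: le1 | rewrite ec_pos // hwj].
Qed.

Lemma ec_not_per c : ec c <> per_word weps.
Proof.
move=> h.
have : Bc c (if c 0%N then 0 else 1)%N = weps by rewrite -block_ec h block_per.
rewrite /Bc; case hc: (c 0%N) => hh; rewrite /= hc /= in hh; move: (hb 0); by rewrite hh eqxx.
Qed.

Lemma ec_inj c c' : ec c = ec c' -> c = c'.
Proof.
move=> h; apply: funext => i.
have : Bc c i.*2 = Bc c' i.*2 by rewrite -!block_ec h.
rewrite !Bc_even; case: (c i); case: (c' i) => //.
  by move/eqP; rewrite (negbTE (hb i)).
by move/esym/eqP; rewrite (negbTE (hb i)).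
Qed.

End W.

Theorem corollary1 (R : realType) (k : nat) (hk : (2 <= k)%N)
  (sigma : k.-tuple bool -> seq bool) (weps : k.-tuple bool)
  (herase : erasing_with sigma weps)
  (hw : weps <> ones_block k)
  (hopt : optimal sigma) :
  forall x : R, 0 <= x <= 1 ->
    ~ countable [set y : R | 0 <= y <= 1 /\ f_sigma sigma weps y = x].
Proof.
move=> x hx hcount.
have hk0 : (0 < k)%N by apply: leq_trans hk.
case: herase => hse _.
have [b [hbne hcat]] := hopt (gw x).
have hb : forall i, b i != weps.
  by move=> i; apply/eqP => hbi; apply: (hbne i); rewrite hbi.
pose y (c : nat -> bool) : R := limn (fun n => dyadic (iprefix (ec k weps b c) n) : R).
have dyD : forall e, (fun n => dyadic (iprefix e n) : R) = D e.
  by move=> e; apply: funext => n; rewrite dyadic_iprefix.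
have hy : forall c, is_tilde (y c) (ec k weps b c).
  move=> c; split; first exact: (@ec_ones k hk0 weps b hb c).
  rewrite /y dyD.
  have hcv : cvgn (D (ec k weps b c) : nat -> R).
    apply: nondecreasing_is_cvgn.
      by move=> m n hmn; apply: D_mono.
    by exists 1 => _ [n _ <-]; apply: D_le1.
  exact: hcv.
have hy01 : forall c, 0 < y c <= 1.
  move=> c; have [_ hc] := hy c; apply/andP; split; last first.
    by apply: (lim_le _ _ _ _ hc) => n; rewrite dyadic_iprefix D_le1.
  have [p _ hp] := @ec_ones k hk0 weps b hb c 0.
  have hp1 := pow_pos (R:=R) p.+1.
  apply: (lt_le_trans hp1); apply: (@lim_ge _ _ _ _ p.+1 _ hc) => n hn.
  rewrite dyadic_iprefix; apply: le_trans (@D_mono _ _ _ _ hn).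
  by rewrite DS hp mul1r lerDr D_ge0.
have htil : forall c, tilde (y c) = ec k weps b c.
  move=> c; apply: (@tilde_uniq R _ _ (y c)); last exact: hy.
  by apply: xgetPex; exists (ec k weps b c); exact: hy.
have hf : forall c, f_sigma sigma weps (y c) = x.
  move=> c; rewrite /f_sigma asboolT; last first.
    by split; [exact: hy01 | rewrite htil; exact: ec_not_per].
  rewrite htil /val_subst /subst_prefix.
  have -> : (fun j => sigma (block k (ec k weps b c) j)) = (fun j => sigma (Bc k weps b c j)).
    by apply: funext => j; rewrite (@block_ec k hk0).
  apply: cvg_lim => //; apply: cvg_half => n.
  have [j [hj ->]] := @sub_any k sigma weps b hse c n.
  rewrite (@concat_prefix _ _ j hcat) dyadic_iprefix.
  exists (size (cat_prefix (fun i => sigma (b i)) j)); split.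
    apply: leq_trans hj _; apply: size_cat_prefix => i; apply/eqP; exact: hbne.
  exact: gw_bound.
case/countable_injP: hcount => f finj.
pose h c := f (y c).
have hinj : forall c c', h c = h c' -> c = c'.
  move=> c c' hcc; apply: (@ec_inj k hk0 weps b hb); apply: (@tilde_uniq R _ _ (y c)); first exact: hy.
  have -> : y c = y c'.
    have hS : forall c0, y c0 \in [set y : R | 0 <= y <= 1 /\ f_sigma sigma weps y = x].
      move=> c0; rewrite inE; split; last exact: hf.
      by case/andP: (hy01 c0) => h1 h2; rewrite ltW.
    by apply: finj => //; apply: hS.
  exact: hy.
pose d n := ~~ `[< exists c, h c = n /\ c n >].
have hP : `[< exists c, h c = h d /\ c (h d) >] = d (h d).
  apply/asboolP/idP => [[c [hc hcn]] | H]; first by move: hcn; rewrite (hinj _ _ hc).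
  by exists d.
have : d (h d) = ~~ d (h d) by rewrite {1}/d hP.
by case: (d (h d)).
Qed.
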